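(* Let $\mathbb W$ and $\mathbb W_i$ be as in the context. For $2\le i\ne j\le n$, the subgroup $\mathbb W_i$ is not conjugate to $\mathbb W_j$ in $\mathbb W$.
   Context: Fix an integer $n\ge 3$, pairwise distinct odd integers $m_1,\dots,m_l\ge 3$ and positive integers $k_1,\dots,k_l$ with $k_1+\cdots+k_l=n-1$. Partition $\{2,\dots,n\}$ into consecutive blocks $A_1=\{2,\dots,k_1+1\}$, $A_2=\{k_1+2,\dots,k_1+k_2+1\}$, …, $A_l$ (of sizes $k_1,\dots,k_l$), and put $t_i=m_j$ for $i\in A_j$. The star group is $\mathbb W=\langle w_1,\dots,w_n\mid w_j^2=1\ (1\le j\le n),\ (w_1w_i)^{t_i}=1\ (2\le i\le n)\rangle$. For $2\le i\le n$ let $\mathbb W_i=\langle w_1,w_i\rangle$. *)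

(* Defs.v *)
From mathcomp Require Import all_boot.
Set Implicit Arguments. Unset Strict Implicit. Unset Printing Implicit Defensive.

(* Generators w_1,...,w_n are encoded by 'I_n : the ordinal a stands for
   w_(a+1).  So ordinal 0 is w_1 and ordinal i (1 <= i < n) is w_(i+1). *)

(* Block labelling: [ms] = [m_1;...;m_l], [ks] = [k_1;...;k_l].
   [blockt ms ks p] is the m_j such that the p-th element (0-based) of
   {2,...,n} lies in the block A_j. *)
Fixpoint blockt (ms ks : seq nat) (p : nat) : nat :=
  match ms, ks with
  | m :: ms', k :: ks' => if p < k then m else blockt ms' ks' (p - k)
  | _, _ => 0
  end.

(* exponent t attached to generator a (0-based, a >= 1 corresponds to
   w_(a+1), i.e. to the element a+1 of {2,...,n}, at position a-1) *)
Definition tcox (ms ks : seq nat) (n : nat) (a : 'I_n) : nat :=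
  blockt ms ks (val a).-1.

Definition is_relator (ms ks : seq nat) (n : nat) (r : seq 'I_n) : Prop :=
  (exists s : 'I_n, r = [:: s; s]) \/
  (exists s0 i : 'I_n, val s0 = 0 /\ 0 < val i /\
     r = flatten (nseq (tcox ms ks i) [:: s0; i])).

(* Equality in the group given by the presentation: the congruence on
   words generated by the relators. *)
Inductive coxeq (ms ks : seq nat) (n : nat) : seq 'I_n -> seq 'I_n -> Prop :=
  | coxeq_refl u : coxeq ms ks u u
  | coxeq_sym u v : coxeq ms ks u v -> coxeq ms ks v u
  | coxeq_trans u v w : coxeq ms ks u v -> coxeq ms ks v w -> coxeq ms ks u w
  | coxeq_rel u v r : is_relator ms ks r -> coxeq ms ks (u ++ v) (u ++ r ++ v).

(* Membership of (the class of) word x in W_i = <w_1, w_i>. *)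
Definition inWi (ms ks : seq nat) (n : nat) (i : 'I_n) (x : seq 'I_n) : Prop :=
  exists y : seq 'I_n,
    all (fun a : 'I_n => (val a == 0) || (a == i)) y /\ coxeq ms ks x y.

(* Subgroups W_i and W_j are conjugate: g W_i g^-1 = W_j for some g.
   Since generators are involutions, the inverse of the word g is rev g. *)
Definition Wconj (ms ks : seq nat) (n : nat) (i j : 'I_n) : Prop :=
  exists g : seq 'I_n, forall x : seq 'I_n,
    inWi ms ks j x <-> inWi ms ks i (rev g ++ x ++ g).

(* Main.v *)
Require Import Defs.
From mathcomp Require Import all_boot.
From mathcomp Require Import ssralg zmodp zify.
Import GRing.Theory.

Lemma blockt_in (ms ks : seq nat) (p : nat) :
  size ks = size ms -> p < sumn ks -> blockt ms ks p \in ms.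
Proof.
elim: ms ks p => [|m ms IH] [|k ks] p //= [] hs hp.
case: ifP => hpk; first by rewrite inE eqxx.
rewrite inE IH ?orbT //.
rewrite ltnNge in hpk; move: hpk hp; move=> /negbFE hpk hp.
by rewrite ltn_subLR.
Qed.

Section Ev.
Variables (m n : nat) (i : 'I_n).
Local Open Scope ring_scope.

Definition gZ (a : 'I_n) (x : 'Z_m) : 'Z_m := if a == i then 1 - x else - x.

Fixpoint evw (w : seq 'I_n) (x : 'Z_m) : 'Z_m :=
  match w with [::] => x | a :: w' => gZ a (evw w' x) end.

Lemma evw_cat u v x : evw (u ++ v) x = evw u (evw v x).
Proof. by elim: u => //= a u ->. Qed.

Lemma gZ_inv a x : gZ a (gZ a x) = x.
Proof. rewrite /gZ; case: (a == i); by rewrite ?opprK // opprB addrC subrK. Qed.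

Lemma evw_rel ms ks r : is_relator ms ks r -> 0 < val i ->
  m = tcox ms ks i -> (1 < m)%N -> forall x, evw r x = x.
Proof.
move=> [[s ->]|[s0 [k [h0 [hk ->]]]]] hi hm hm1 x /=; first exact: gZ_inv.
have hs0 : (s0 == i) = false.
  by apply/negbTE; apply/eqP => e; move: hi; rewrite -e h0.
have H : forall t, evw (flatten (nseq t [:: s0; k])) x =
    if k == i then x - t%:R else x.
  elim=> [|t IHt] /=; first by case: (k == i); rewrite ?subr0.
  rewrite IHt /gZ hs0; case: (k == i).
    by rewrite opprB -[(t.+1)%:R]natr1 opprD addrA.
  by rewrite opprK.
rewrite H; case: eqP => // ->.
by rewrite -/(tcox ms ks i) -hm pchar_Zp // subr0.
Qed.

Lemma coxeq_ev ms ks u v : 0 < val i -> m = tcox ms ks i -> (1 < m)%N ->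
  coxeq ms ks u v -> forall x, evw u x = evw v x.
Proof.
move=> hi hm hm1 H; elim: H => {u v}.
- by [].
- by move=> u1 v1 _ H x; rewrite H.
- by move=> u1 v1 w1 _ H1 _ H2 x; rewrite H1 H2.
- by move=> u' v' r hr x; rewrite !evw_cat (@evw_rel ms ks r hr hi hm hm1).
Qed.

End Ev.
Arguments evw m {n} i w x.
Arguments gZ m {n} i a x.

Lemma cancel_rev ms ks n (g u v : seq 'I_n) :
  coxeq ms ks (u ++ rev g ++ g ++ v) (u ++ v).
Proof.
elim: g u v => [|a g IH] u v; first exact: coxeq_refl.
have e : u ++ rev (a :: g) ++ (a :: g) ++ v =
   (u ++ rev g) ++ [:: a; a] ++ (g ++ v)
  by rewrite rev_cons -cats1 -!catA.
rewrite e; apply: coxeq_trans (coxeq_sym (coxeq_rel _ _ _)) _.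
  by left; exists a.
rewrite -catA; exact: IH.
Qed.

Lemma inWi_cox ms ks n (i : 'I_n) z z' :
  inWi ms ks i z -> coxeq ms ks z' z -> inWi ms ks i z'.
Proof.
move=> [y [hy hc]] h; exists y; split => //; exact: coxeq_trans h hc.
Qed.

Lemma evWj m n (i j : 'I_n) (y : seq 'I_n) : 0 < val i -> j != i ->
  all (fun a : 'I_n => (val a == 0) || (a == j)) y ->
  (forall x, evw m i y x = x) \/ (forall x, evw m i y x = - x)%R.
Proof.
move=> hi hji; elim: y => [|a y IH] /=; first by left.
move=> /andP [ha /IH [H|H]].
  have hai : (a == i) = false.
    apply/negbTE; apply/eqP => e; move: ha; rewrite e.
    by case/orP => [/eqP e'|/eqP e']; [move: hi; change (\val i) with (nat_of_ord i); rewrite e'|move: hji; rewrite e' eqxx].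
  by right => x; rewrite /gZ hai H.
have hai : (a == i) = false.
  apply/negbTE; apply/eqP => e; move: ha; rewrite e.
  by case/orP => [/eqP e'|/eqP e']; [move: hi; change (\val i) with (nat_of_ord i); rewrite e'|move: hji; rewrite e' eqxx].
by left => x; rewrite /gZ hai H GRing.opprK.
Qed.

Theorem lemma3p4 (n : nat) (ms ks : seq nat)
  (hn : 3 <= n)
  (hsize : size ks = size ms)
  (huniq : uniq ms)
  (hms : all (fun m => odd m && (3 <= m)) ms)
  (hks : all (fun k => 0 < k) ks)
  (hsum : sumn ks = n - 1)
  (i j : 'I_n) (hi : 0 < val i) (hj : 0 < val j) (hij : i != j) :
  ~ Wconj ms ks i j.
Proof.
move=> [g Hg].
set m := tcox ms ks i.
have hm3 : 2 < m.
  have hin : m \in ms.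
    apply: blockt_in => //; rewrite hsum.
    have := ltn_ord i; move: hi; change (\val i) with (nat_of_ord i); lia.
  by move/allP: hms => /(_ _ hin) /andP [].
have hm1 : 1 < m by apply: ltnW.
have ev_cox : forall u v, coxeq ms ks u v -> forall x, evw m i u x = evw m i v x.
  by move=> u v; exact: (@coxeq_ev m n i ms ks u v hi erefl hm1).
have hinv1 : forall x, evw m i (rev g) (evw m i g x) = x.
  by move=> x; have := ev_cox _ _ (cancel_rev ms ks n g [::] [::]) x; rewrite /= cats0 evw_cat.
have hinv2 : forall x, evw m i g (evw m i (rev g) x) = x.
  move=> x; have := ev_cox _ _ (cancel_rev ms ks n (rev g) [::] [::]) x.
  by rewrite /= cats0 revK evw_cat.
have key : forall a : 'I_n, (val a == 0) || (a == i) ->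
   (forall x, evw m i g (gZ m i a (evw m i (rev g) x)) = x) \/
   (forall x, evw m i g (gZ m i a (evw m i (rev g) x)) = - x)%R.
  move=> a ha.
  have h : inWi ms ks i (rev g ++ (g ++ [:: a] ++ rev g) ++ g).
    apply: (@inWi_cox ms ks n i [:: a]).
      by exists [:: a]; split; [rewrite /= ha | exact: coxeq_refl].
    rewrite -!catA.
    apply: coxeq_trans (cancel_rev ms ks n g [::] ([:: a] ++ rev g ++ g)) _.
    have := cancel_rev ms ks n g [:: a] [::]; rewrite cats0 /=; exact.
  have [y [hy hc]] := (Hg _).2 h.
  have hji : j != i by rewrite eq_sym.
  case: (@evWj m n i j y hi hji hy) => H; [left|right] => x;
    have := ev_cox _ _ hc x; rewrite H !evw_cat /=; by [].
have a0lt : 0 < n by apply: leq_trans hn.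
pose a0 : 'I_n := Ordinal a0lt.
have ha0i : (a0 == i) = false.
  apply/negbTE; apply/eqP => e; move: hi; rewrite -e.
  by change (\val a0) with 0.
have ha0 : (val a0 == 0) || (a0 == i) by [].
have hii : (val i == 0) || (i == i) by rewrite eqxx orbT.
case: (key i hii) => H1.
  have := H1 (evw m i g 0%R); rewrite hinv1 /gZ eqxx GRing.subr0 => e.
  have := congr1 (evw m i (rev g)) e; rewrite !hinv1 => /eqP.
  by rewrite GRing.oner_eq0.
case: (key a0 ha0) => H0.
  have := H0 (evw m i g 1%R); rewrite hinv1 /gZ ha0i => e.
  have := congr1 (evw m i (rev g)) e; rewrite !hinv1 => e2.
  have h2 : ((2%:R : 'Z_m) = 0)%R by rewrite GRing.mulr2n -{1}e2 GRing.addNr.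
  move/(congr1 (@nat_of_ord _)): h2; rewrite val_Zp_nat // modn_small //.
have := H0 (evw m i g 0%R); rewrite -(H1 (evw m i g 0%R)) hinv1 /gZ ha0i eqxx => e.
have := congr1 (evw m i (rev g)) e; rewrite !hinv1 GRing.subr0 GRing.oppr0 => /eqP.
by rewrite eq_sym GRing.oner_eq0.
Qed.
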